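(* Let $p$ be a propositional variable. The formula $\neg\neg\Box p\to\Box\neg\neg p$ is derivable in $\mathsf{CK}\oplus\mathsf{N}_\Diamond\oplus\mathsf{I}_{\Diamond\Box}$ but not in $\mathsf{CK}\oplus\mathsf{N}_{\Diamond\Box}\oplus\mathsf{C}_\Diamond\oplus\mathsf{I}_{\Diamond\Box}$ (and hence not in $\mathsf{CK}\oplus\mathsf{N}_{\Diamond\Box}\oplus\mathsf{I}_{\Diamond\Box}$).
   Context: Formulas: $\mathbf{L}$ is generated from a countably infinite set of propositional variables by $\varphi ::= p \mid \bot \mid \varphi\wedge\varphi \mid \varphi\vee\varphi \mid \varphi\to\varphi \mid \Box\varphi \mid \Diamond\varphi$; $\neg\varphi:=\varphi\to\bot$. Axioms: $\mathsf{K}_\Box$: $\Box(\varphi\to\psi)\to(\Box\varphi\to\Box\psi)$; $\mathsf{K}_\Diamond$: $\Box(\varphi\to\psi)\to(\Diamond\varphi\to\Diamond\psi)$; $\mathsf{N}_\Diamond$: $\Diamond\bot\to\bot$; $\mathsf{N}_{\Diamond\Box}$: $\Diamond\bot\to\Box\bot$; $\mathsf{C}_\Diamond$: $\Diamond(\varphi\vee\psi)\to\Diamond\varphi\vee\Diamond\psi$; $\mathsf{I}_{\Diamond\Box}$: $(\Diamond\varphi\to\Box\psi)\to\Box(\varphi\to\psi)$. For a set $\mathsf{Ax}$ of axioms, $\mathsf{CK}\oplus\mathsf{Ax}$ is the relation $\Gamma\vdash_{\mathsf{Ax}}\varphi$ inductively generated by: (Ax) $\Gamma\vdash\varphi$ whenever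 $\varphi$ is a substitution instance of an axiom of a standard Hilbert axiomatisation of intuitionistic propositional logic, of $\mathsf{K}_\Box$, of $\mathsf{K}_\Diamond$, or of an element of $\mathsf{Ax}$; (El) $\Gamma\vdash\varphi$ if $\varphi\in\Gamma$; (MP) from $\Gamma\vdash\varphi$ and $\Gamma\vdash\varphi\to\psi$ infer $\Gamma\vdash\psi$; (Nec) from $\emptyset\vdash\varphi$ infer $\Gamma\vdash\Box\varphi$. A formula is derivable in a logic if $\emptyset\vdash_{\mathsf{Ax}}\varphi$. *)

(* Defs.v *)
From Stdlib Require Import List.

Inductive form : Type :=
| Var : nat -> form
| Bot : form
| And : form -> form -> form
| Or : form -> form -> form
| Imp : form -> form -> form
| Box : form -> form
| Dia : form -> form.

Definition Neg (a : form) : form := Imp a Bot.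

(* Axiom schemas of a standard Hilbert axiomatisation of IPC.  Using schemas
   (all formulas a b c) is the same as taking all substitution instances. *)
Inductive IPC_ax : form -> Prop :=
| ipc_k  : forall a b, IPC_ax (Imp a (Imp b a))
| ipc_s  : forall a b c, IPC_ax (Imp (Imp a (Imp b c)) (Imp (Imp a b) (Imp a c)))
| ipc_and1 : forall a b, IPC_ax (Imp (And a b) a)
| ipc_and2 : forall a b, IPC_ax (Imp (And a b) b)
| ipc_andI : forall a b, IPC_ax (Imp a (Imp b (And a b)))
| ipc_or1 : forall a b, IPC_ax (Imp a (Or a b))
| ipc_or2 : forall a b, IPC_ax (Imp b (Or a b))
| ipc_orE : forall a b c, IPC_ax (Imp (Imp a c) (Imp (Imp b c) (Imp (Or a b) c)))
| ipc_efq : forall a, IPC_ax (Imp Bot a).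

Definition K_Box (f : form) : Prop :=
  exists a b, f = Imp (Box (Imp a b)) (Imp (Box a) (Box b)).
Definition K_Dia (f : form) : Prop :=
  exists a b, f = Imp (Box (Imp a b)) (Imp (Dia a) (Dia b)).
Definition N_Dia (f : form) : Prop := f = Imp (Dia Bot) Bot.
Definition N_DiaBox (f : form) : Prop := f = Imp (Dia Bot) (Box Bot).
Definition C_Dia (f : form) : Prop :=
  exists a b, f = Imp (Dia (Or a b)) (Or (Dia a) (Dia b)).
Definition I_DiaBox (f : form) : Prop :=
  exists a b, f = Imp (Imp (Dia a) (Box b)) (Box (Imp a b)).

Definition AxSet := form -> Prop.
Definition ax_union (A B : AxSet) : AxSet := fun f => A f \/ B f.

Inductive derives (Ax : AxSet) : (form -> Prop) -> form -> Prop :=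
| d_ipc : forall G f, IPC_ax f -> derives Ax G f
| d_kbox : forall G f, K_Box f -> derives Ax G f
| d_kdia : forall G f, K_Dia f -> derives Ax G f
| d_ax : forall G f, Ax f -> derives Ax G f
| d_el : forall (G : form -> Prop) f, G f -> derives Ax G f
| d_mp : forall G f g, derives Ax G f -> derives Ax G (Imp f g) -> derives Ax G g
| d_nec : forall G f, derives Ax (fun _ => False) f -> derives Ax G (Box f).

Definition derivable (Ax : AxSet) (f : form) : Prop :=
  derives Ax (fun _ => False) f.

Definition L_NDia_IDiaBox : AxSet := ax_union N_Dia I_DiaBox.
Definition L_NDiaBox_CDia_IDiaBox : AxSet :=
  ax_union N_DiaBox (ax_union C_Dia I_DiaBox).
Definition L_NDiaBox_IDiaBox : AxSet := ax_union N_DiaBox I_DiaBox.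

(* Main.v *)
Require Import Defs.

Section Hilbert.
Variable Ax : AxSet.

Definition ext (G : form -> Prop) (a : form) : form -> Prop :=
  fun x => x = a \/ G x.

Lemma weaken : forall G f, derives Ax G f ->
  forall G', (forall x, G x -> G' x) -> derives Ax G' f.
Proof.
  induction 1; intros G' H'.
  - apply d_ipc; auto.
  - apply d_kbox; auto.
  - apply d_kdia; auto.
  - apply d_ax; auto.
  - apply d_el; auto.
  - eapply d_mp; eauto.
  - apply d_nec; auto.
Qed.

Lemma d_id : forall G a, derives Ax G (Imp a a).
Proof.
  intros G a.
  eapply d_mp. apply d_ipc, (ipc_k a a).
  eapply d_mp. apply d_ipc, (ipc_k a (Imp a a)).
  apply d_ipc, (ipc_s a (Imp a a) a).
Qed.

Lemma deduction : forall G' f, derives Ax G' f ->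
  forall G a, (forall x, G' x -> x = a \/ G x) -> derives Ax G (Imp a f).
Proof.
  induction 1; intros G0 a Hs.
  - eapply d_mp. apply d_ipc; eauto. apply d_ipc, ipc_k.
  - eapply d_mp. apply d_kbox; eauto. apply d_ipc, ipc_k.
  - eapply d_mp. apply d_kdia; eauto. apply d_ipc, ipc_k.
  - eapply d_mp. apply d_ax; eauto. apply d_ipc, ipc_k.
  - destruct (Hs f H) as [-> | Hg].
    + apply d_id.
    + eapply d_mp. apply d_el; eauto. apply d_ipc, ipc_k.
  - eapply d_mp. apply IHderives1; auto.
    eapply d_mp. apply IHderives2; auto.
    apply d_ipc, ipc_s.
  - eapply d_mp. apply d_nec; eauto. apply d_ipc, ipc_k.
Qed.

Lemma ded : forall G a f, derives Ax (ext G a) f -> derives Ax G (Imp a f).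
Proof. intros. eapply deduction; eauto. Qed.

Lemma hyp : forall G a, derives Ax (ext G a) a.
Proof. intros. apply d_el. left; reflexivity. Qed.

End Hilbert.

Definition empty : form -> Prop := fun _ => False.

Lemma part1 : forall p,
  derivable L_NDia_IDiaBox (Imp (Neg (Neg (Box (Var p)))) (Box (Neg (Neg (Var p))))).
Proof.
  intros p. unfold derivable.
  set (Ax := L_NDia_IDiaBox).
  apply ded.
  set (G1 := ext empty (Neg (Neg (Box (Var p))))).
  assert (Hpnn : derives Ax empty (Imp (Var p) (Neg (Neg (Var p))))).
  { apply ded. apply ded. eapply d_mp. apply weaken with (G := ext empty (Var p)).
    apply hyp. intros x Hx; right; exact Hx. apply hyp. }
  assert (Hbox : derives Ax (ext (ext G1 (Dia (Neg (Var p)))) (Box (Var p)))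
                   (Box (Neg (Neg (Var p))))).
  { eapply d_mp. apply hyp.
    eapply d_mp. apply d_nec, Hpnn.
    apply d_kbox. do 2 eexists; reflexivity. }
  assert (HdB : derives Ax (ext (ext G1 (Dia (Neg (Var p)))) (Box (Var p))) (Dia Bot)).
  { eapply d_mp. apply d_el. right. left. reflexivity.
    eapply d_mp. apply Hbox.
    apply d_kdia. exists (Neg (Var p)), Bot. reflexivity. }
  assert (Hbot : derives Ax (ext (ext G1 (Dia (Neg (Var p)))) (Box (Var p))) Bot).
  { eapply d_mp. apply HdB. apply d_ax. left. reflexivity. }
  apply ded in Hbot.
  assert (Hbot2 : derives Ax (ext G1 (Dia (Neg (Var p)))) Bot).
  { eapply d_mp. apply Hbot. apply d_el. right. left. reflexivity. }
  assert (HBB : derives Ax (ext G1 (Dia (Neg (Var p)))) (Box Bot)).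
  { eapply d_mp. apply Hbot2. apply d_ipc, ipc_efq. }
  apply ded in HBB.
  eapply d_mp. apply HBB.
  apply d_ax. right. exists (Neg (Var p)), Bot. reflexivity.
Qed.

(* Countermodel: Heyting algebra 3-chain with operators *)
Inductive three := Z | M | T.

Definition meet3 (x y : three) : three :=
  match x, y with Z, _ => Z | _, Z => Z | M, _ => M | _, M => M | T, T => T end.
Definition join3 (x y : three) : three :=
  match x, y with T, _ => T | _, T => T | M, _ => M | _, M => M | Z, Z => Z end.
Definition le3 (x y : three) : bool :=
  match x, y with Z, _ => true | M, M => true | M, T => true | T, T => true | _, _ => false end.
Definition imp3 (x y : three) : three := if le3 x y then T else y.
Definition B3 (x : three) : three := match x with T => T | _ => M end.
Definition D3 (x : three) : three := match x with Z => M | _ => T end.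

Fixpoint ev (v : nat -> three) (f : form) : three :=
  match f with
  | Var n => v n
  | Bot => Z
  | And a b => meet3 (ev v a) (ev v b)
  | Or a b => join3 (ev v a) (ev v b)
  | Imp a b => imp3 (ev v a) (ev v b)
  | Box a => B3 (ev v a)
  | Dia a => D3 (ev v a)
  end.

Definition valid f := forall v, ev v f = T.

Lemma sound : forall Ax, (forall f, Ax f -> valid f) ->
  forall G f, derives Ax G f -> (forall g, G g -> valid g) -> valid f.
Proof.
  intros Ax HAx G f D. induction D; intros HG v.
  - destruct H; simpl;
    repeat match goal with |- context [ev v ?a] =>
      destruct (ev v a) end; reflexivity.
  - destruct H as [a [b ->]]; simpl;
    destruct (ev v a), (ev v b); reflexivity.
  - destruct H as [a [b ->]]; simpl;
    destruct (ev v a), (ev v b); reflexivity.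
  - apply HAx; auto.
  - apply HG; auto.
  - specialize (IHD1 HG v). specialize (IHD2 HG v). simpl in IHD2.
    rewrite IHD1 in IHD2. destruct (ev v g); auto.
  - simpl. rewrite (IHD (fun _ H => False_ind _ H) v). reflexivity.
Qed.

Lemma ax_valid1 : forall f, L_NDiaBox_CDia_IDiaBox f -> valid f.
Proof.
  intros f [H | [H | H]]; intro v.
  - rewrite H; reflexivity.
  - destruct H as [a [b ->]]; simpl; destruct (ev v a), (ev v b); reflexivity.
  - destruct H as [a [b ->]]; simpl; destruct (ev v a), (ev v b); reflexivity.
Qed.

Lemma ax_valid2 : forall f, L_NDiaBox_IDiaBox f -> valid f.
Proof.
  intros f [H | H]; intro v.
  - rewrite H; reflexivity.
  - destruct H as [a [b ->]]; simpl; destruct (ev v a), (ev v b); reflexivity.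
Qed.

Theorem mainTheorem16 : forall p : nat,
  let phi := Imp (Neg (Neg (Box (Var p)))) (Box (Neg (Neg (Var p)))) in
  derivable L_NDia_IDiaBox phi /\
  ~ derivable L_NDiaBox_CDia_IDiaBox phi /\
  ~ derivable L_NDiaBox_IDiaBox phi.
Proof.
  intros p phi. split; [|split].
  - apply part1.
  - intro H. pose proof (sound _ ax_valid1 _ _ H (fun _ H => False_ind _ H) (fun _ => Z)).
    discriminate.
  - intro H. pose proof (sound _ ax_valid2 _ _ H (fun _ H => False_ind _ H) (fun _ => Z)).
    discriminate.
Qed.
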